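(* Let $\Lambda$ be a countable index set, $\overline{a},\overline{r}$ sequences of positive reals indexed by $\Lambda$, $t\in(1,2)$ and $x\in\mathbb{R}^\Lambda$. Then $x\in k_t$ if and only if $\eta(x):=\sup_{\alpha>0}\alpha^{t-1}\|T_\alpha(x)\|_{\overline{r},1}<\infty$. More precisely, $\eta(x)\le2(1-2^{1-t})^{-1}\|x\|_{k_t}^t$ and $\|x\|_{k_t}\le\eta(x)^{1/t}$.
   Context: $\|x\|_{\overline{r},1}=\sum_{j\in\Lambda}\overline{r}_j|x_j|$ (possibly $+\infty$). For $t\in(0,2)$, $k_t=\{x\in\mathbb{R}^\Lambda:\|x\|_{k_t}<\infty\}$ with $\|x\|_{k_t}=\sup_{\alpha>0}\alpha\left(\sum_{j}\overline{a}_j^{-2}\overline{r}_j^2\mathbf{1}_{\{\overline{a}_j^{-2}\overline{r}_j\alpha<|x_j|\}}\right)^{1/t}$. For $\alpha>0$, $T_\alpha(x)_j=x_j$ if $\overline{a}_j^{-2}\overline{r}_j\alpha<|x_j|$ and $T_\alpha(x)_j=0$ otherwise. *)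

(* Defs.v *)
From HB Require Import structures.
From mathcomp Require Import all_boot all_order all_algebra.
From mathcomp Require Import all_classical all_reals all_analysis.
Set Implicit Arguments. Unset Strict Implicit. Unset Printing Implicit Defensive.
Import Order.TTheory GRing.Theory Num.Theory.
Local Open Scope classical_set_scope.
Local Open Scope ring_scope.

(* Lambda : countType (countable index set); a, r : Lambda -> R (positive);
   all (possibly infinite) sums of nonnegative terms are taken in \bar R via esum. *)
Section Defs.
Variables (R : realType) (L : countType).

Definition rnorm1 (r x : L -> R) : \bar R :=
  \esum_(j in [set: L]) (r j * `|x j|)%:E.

Definition above (a r x : L -> R) (alpha : R) (j : L) : bool :=
  (a j ^-2 * r j * alpha < `|x j|).

Definition kt_mass (a r x : L -> R) (alpha : R) : \bar R :=
  \esum_(j in [set: L]) (if above a r x alpha j then (a j ^-2 * r j ^+ 2)%:E else 0%E).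

Definition kt_norm (a r : L -> R) (t : R) (x : L -> R) : \bar R :=
  ereal_sup [set y | exists2 alpha : R, 0 < alpha &
                       y = (alpha%:E * (kt_mass a r x alpha `^ t^-1))%E].

Definition in_kt (a r : L -> R) (t : R) (x : L -> R) : Prop :=
  (kt_norm a r t x < +oo)%E.

Definition Talpha (a r : L -> R) (alpha : R) (x : L -> R) : L -> R :=
  fun j => if above a r x alpha j then x j else 0.

Definition eta_kt (a r : L -> R) (t : R) (x : L -> R) : \bar R :=
  ereal_sup [set y | exists2 alpha : R, 0 < alpha &
                       y = ((alpha `^ (t - 1))%:E * rnorm1 r (Talpha a r alpha x))%E].
End Defs.

(* Main.v *)
Require Import Defs.
From HB Require Import structures.
From mathcomp Require Import all_boot all_order all_algebra.
From mathcomp Require Import all_classical all_reals all_analysis.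
From mathcomp Require Import ring lra.
From mathcomp Require Import finmap.
Set Implicit Arguments. Unset Strict Implicit.
Import Order.TTheory GRing.Theory Num.Theory.
Local Open Scope classical_set_scope.
Local Open Scope ring_scope.
Lemma ind_le (R : realType) (u w c al : R) : 0 < w -> 0 < c -> 0 < al -> 0 <= u ->
  forall n : nat, u <= 2 ^+ n * (w * al) ->
  (if w * al < u then c * u else 0) <=
  \sum_(i < n) 2 ^+ i.+1 * al * (if w * (2 ^+ i * al) < u then w * c else 0).
Proof.
move=> w0 c0 al0 u0; elim=> [|n IH] hn.
  by rewrite big_ord0; move: hn; rewrite expr0 mul1r leNgt => /negbTE ->.
have tnn : forall i : 'I_n, true -> 0 <= 2 ^+ i.+1 * al * (if w * (2 ^+ i * al) < u then w * c else 0).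
  move=> i _; case: ifP => _; rewrite ?mulr0 //.
  by rewrite !mulr_ge0 // ?exprn_ge0 ?ltW.
rewrite big_ord_recr /=.
have [hl|hl] := ltP (w * (2 ^+ n * al)) u.
  apply: le_trans (_ : c * u <= _).
    by case: ifP => _ //; rewrite mulr_ge0 // ltW.
  rewrite -[X in X <= _]add0r; apply: lerD; first by rewrite sumr_ge0.
  rewrite [X in _ <= X](_ : _ = c * (2 ^+ n.+1 * (w * al))); last first.
    by ring.
  rewrite ler_pM2l //.
rewrite mulr0 addr0; apply: IH.
by rewrite mulrCA.
Qed.


Lemma two_neq0 (R : realType) : (2 : R) != 0.
Proof. by rewrite pnatr_eq0. Qed.

Lemma geom_le (R : realType) (q : R) n : 0 <= q -> q < 1 ->
  \sum_(i < n) q ^+ i <= (1 - q)^-1.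
Proof.
move=> q0 q1; have hq : 0 < 1 - q by rewrite subr_gt0.
rewrite -(ler_pM2l hq) mulfV ?gt_eqF //.
have -> : (1 - q) * \sum_(i < n) q ^+ i = 1 - q ^+ n.
  have := subrX1 q n => h.
  have -> : 1 - q = - (q - 1) by rewrite opprB.
  by rewrite mulNr -h opprB.
by rewrite lerBlDr lerDl exprn_ge0.
Qed.

Lemma inv_powR (R : realType) (y t : R) : 0 < y -> (y^-1) `^ t = (y `^ t)^-1.
Proof.
move=> y0; have h : (y^-1) `^ t * y `^ t = 1.
  by rewrite -powRM ?invr_ge0 ?ltW // mulVf ?gt_eqF // powR1.
rewrite -[LHS]mulr1 -[X in _ * X](mulfV (x := y `^ t)) ?gt_eqF ?powR_gt0 //.
by rewrite mulrA h mul1r.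
Qed.

Lemma pow2_lt (R : realType) (t : R) : 1 < t -> 2 < (2 : R) `^ t.
Proof.
move=> t1; rewrite /powR ifF ?gt_eqF //.
rewrite -[X in X < _](lnK (x := 2)) ?posrE //.
by rewrite ltr_expR ltr_pMl // ln_gt0 // ltr1n.
Qed.

Lemma q_props (R : realType) (t : R) : 1 < t ->
  0 <= (2 : R) `^ (1 - t) /\ (2 : R) `^ (1 - t) < 1 /\ (2 : R) `^ (1 - t) = 2 / 2 `^ t.
Proof.
move=> t1; have e : (2 : R) `^ (1 - t) = 2 / 2 `^ t.
  rewrite powRB; last by rewrite two_neq0 implybT.
  by rewrite powRr1 // ler0n.
split; first exact: powR_ge0.
split=> //; rewrite e ltr_pdivrMr ?powR_gt0 // mul1r; exact: pow2_lt.
Qed.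

Lemma term_eq (R : realType) (t k al : R) (i : nat) : 0 < al -> 0 <= k ->
  2 ^+ i.+1 * al * (k / (2 ^+ i * al)) `^ t =
  2 * al * (k / al) `^ t * ((2 : R) `^ (1 - t)) ^+ i.
Proof.
move=> al0 k0.
have -> : k / (2 ^+ i * al) = (k / al) * (2 ^+ i)^-1.
  by rewrite invfM; ring.
have h1 : 0 <= k / al by rewrite divr_ge0 // ltW.
have h2 : 0 <= (2 ^+ i : R)^-1 by rewrite invr_ge0 exprn_ge0.
rewrite (powRM _ h1 h2) inv_powR ?exprn_gt0 //.
rewrite -(powR_mulrn (a := 2) i) ?ler0n // powRAC powR_mulrn ?powR_ge0 //.
rewrite powRB ?two_neq0 ?implybT // powRr1 ?ler0n // exprMn exprVn exprS.
ring.
Qed.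

Section S.
Variables (R : realType) (L : countType) (a r : L -> R).
Hypotheses (ha : forall j, 0 < a j) (hr : forall j, 0 < r j).
Variables (t : R) (x : L -> R).
Hypothesis (ht1 : 1 < t).

Lemma t0 : 0 < t. Proof. by apply: lt_trans ht1. Qed.
Lemma tinv0 : t^-1 != 0. Proof. by rewrite invr_eq0 gt_eqF // t0. Qed.

Lemma fsE (f : L -> R) (A : set L) : finite_set A ->
  (\sum_(j \in A) (f j)%:E = (\sum_(j <- fset_set A) f j)%:E)%E.
Proof. by move=> fA; rewrite fsbig_finite // sumEFin. Qed.

Lemma w_gt0 j : 0 < a j ^-2 * r j.
Proof. by rewrite mulr_gt0 // invr_gt0 exprn_gt0. Qed.

Lemma m_ge0 j : 0 <= a j ^-2 * r j ^+ 2.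
Proof. by rewrite mulr_ge0 // ?invr_ge0 exprn_ge0 // ltW. Qed.

Lemma mass_bound (k : R) : (kt_norm a r t x <= k%:E)%E ->
  forall be, 0 < be -> forall A : set L, finite_set A ->
  \sum_(j <- fset_set A) (if above a r x be j then a j ^-2 * r j ^+ 2 else 0)
    <= (k / be) `^ t.
Proof.
move=> hk be be0 A fA.
set S := \sum_(j <- _) _.
have S0 : 0 <= S by rewrite sumr_ge0 // => j _; case: ifP => // _; exact: m_ge0.
have hS : (S%:E <= kt_mass a r x be)%E.
  rewrite /kt_mass; apply: esum_ge; exists A; first by split.
  rewrite fsbig_finite // /S -sumEFin; apply: lee_sum => j _.
  by case: ifP.
have hn : (be%:E * kt_mass a r x be `^ t^-1 <= k%:E)%E.
  apply: le_trans hk; apply: ereal_sup_ubound; by exists be.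
have M0 : (0 <= kt_mass a r x be)%E.
  by apply: esum_ge0 => j _; case: ifP => // _; rewrite lee_fin m_ge0.
move: hS hn M0; case: (kt_mass a r x be) => [mm| |] hS hn M0 //; last first.
  by move: hn; rewrite poweRyr ?tinv0 // gt0_muley ?lte_fin //.
rewrite poweR_EFin -EFinM !lee_fin in hS hn M0 *.
have pm0 : 0 <= mm `^ t^-1 by apply: powR_ge0.
have k0 : 0 <= k by apply: le_trans hn; rewrite mulr_ge0 // ltW.
have -> : S = (S `^ t^-1) `^ t.
  by rewrite -powRrM mulVf ?gt_eqF ?t0 // powRr1.
apply: ge0_ler_powR; first by rewrite ltW // t0.
- by rewrite nnegrE powR_ge0.
- by rewrite nnegrE divr_ge0 // ltW.
apply: (le_trans (y := mm `^ t^-1)).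
  apply: ge0_ler_powR => //; first by rewrite invr_ge0 ltW // t0.

by rewrite ler_pdivlMr // mulrC.
Qed.

Lemma pow2_nat (n : nat) : (n%:R : R) <= 2 ^+ n.
Proof. by rewrite -natrX ler_nat ltnW // ltn_expl. Qed.

Lemma pow2_mono (m n : nat) : (m <= n)%N -> (2 : R) ^+ m <= 2 ^+ n.
Proof. by move=> mn; rewrite ler_eXn2l // ltr1n. Qed.

Lemma exN (s : seq L) (al : R) : 0 < al ->
  exists N : nat, forall j, j \in s -> `|x j| <= 2 ^+ N * (a j ^-2 * r j * al).
Proof.
move=> al0; elim: s => [|j s [N IH]]; first by exists 0%N.
have v0 : 0 < a j ^-2 * r j * al by rewrite mulr_gt0 // w_gt0.
set n0 := Num.bound (`|x j| / (a j ^-2 * r j * al)).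
have h0 : `|x j| / (a j ^-2 * r j * al) < n0%:R.
  by apply: archi_boundP; rewrite divr_ge0 // ltW.
exists (maxn N n0) => i; rewrite inE => /orP[/eqP ->|/IH hi].
  rewrite -ler_pdivrMr //; apply: (le_trans (ltW h0)).
  by apply: le_trans (pow2_nat _) _; apply: pow2_mono; rewrite leq_maxr.
apply: (le_trans hi); rewrite ler_pM2r; last by rewrite mulr_gt0 // w_gt0.
by apply: pow2_mono; rewrite leq_maxl.
Qed.

Lemma ineq1 (k : R) : (kt_norm a r t x <= k%:E)%E -> 0 <= k ->
  forall al, 0 < al ->
  ((al `^ (t - 1))%:E * rnorm1 r (Talpha a r al x)
     <= (2 * (1 - 2 `^ (1 - t))^-1 * k `^ t)%:E)%E.
Proof.
move=> hk k0 al al0.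
have [q0 [q1 qe]] := q_props ht1.
set q := 2 `^ (1 - t) in q0 q1 qe *.
set D := 2 * al * (k / al) `^ t * (1 - q)^-1.
suff hN : (rnorm1 r (Talpha a r al x) <= D%:E)%E.
  apply: le_trans (lee_wpmul2l _ hN) _; first by rewrite lee_fin powR_ge0.
  rewrite -EFinM lee_fin le_eqVlt; apply/orP; left; apply/eqP.
  rewrite /D.
  have h1 : 0 <= k by [].
  have h2 : 0 <= al^-1 by rewrite invr_ge0 ltW.
  rewrite (powRM _ h1 h2) inv_powR //.
  have e : al `^ (t - 1) * al = al `^ t by rewrite mulrC mulr_powRB1 ?t0 // ltW.
  rewrite -e.
  have ne : al `^ (t - 1) != 0 by rewrite gt_eqF // powR_gt0.
  field; rewrite ?ne ?gt_eqF ?subr_gt0 //.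
rewrite /rnorm1 /esum; apply: ge_ereal_sup => _ [A [fA _] <-].
rewrite fsE // lee_fin.
set s := fset_set A.
have [N hNs] := exN s al0.
apply: (le_trans (y := \sum_(j <- s) \sum_(i < N) 2 ^+ i.+1 * al *
   (if a j ^-2 * r j * (2 ^+ i * al) < `|x j| then a j ^-2 * r j * r j else 0))).
  rewrite big_seq_cond [X in _ <= X]big_seq_cond; apply: ler_sum => j /andP[js _].
  have := ind_le (w_gt0 j) (hr j) al0 (normr_ge0 (x j)) (hNs j js).
  apply: le_trans.
  rewrite /Talpha /above; case: ifP => _ //.
  by rewrite normr0 mulr0.
rewrite exchange_big /=.
apply: (le_trans (y := \sum_(i < N) 2 * al * (k / al) `^ t * q ^+ i)).
  apply: ler_sum => i _.
  rewrite -term_eq // -mulr_sumr; apply: ler_wpM2l.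
    by rewrite mulr_ge0 ?exprn_ge0 // ltW.
  have := mass_bound hk (mulr_gt0 (exprn_gt0 i (ltr0n R 2)) al0) fA.
  apply: le_trans; rewrite le_eqVlt; apply/orP; left; apply/eqP.
  by apply: eq_bigr => j _; rewrite /above expr2 [a j ^-2 * (r j * r j)]mulrA.
rewrite -mulr_sumr /D; apply: ler_wpM2l; last exact: geom_le.
by rewrite !mulr_ge0 ?powR_ge0 // ltW.
Qed.

Lemma N_ge0 al : (0 <= rnorm1 r (Talpha a r al x))%E.
Proof. by apply: esum_ge0 => j _; rewrite lee_fin mulr_ge0 // ltW. Qed.

Lemma M_ge0 al : (0 <= kt_mass a r x al)%E.
Proof. by apply: esum_ge0 => j _; case: ifP => // _; rewrite lee_fin m_ge0. Qed.

Lemma MN al : 0 < al -> (al%:E * kt_mass a r x al <= rnorm1 r (Talpha a r al x))%E.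
Proof.
move=> al0; rewrite /kt_mass {1}/esum -ereal_sup_pZl //.
apply: ge_ereal_sup => _ [_ [A [fA _] <-] <-].
rewrite /rnorm1; apply: esum_ge; exists A; first by split.
rewrite fsE // fsbig_finite //.
have -> : (\sum_(j <- fset_set A) (if above a r x al j then (a j ^-2 * r j ^+ 2)%:E else 0%E)
   = (\sum_(j <- fset_set A) (if above a r x al j then a j ^-2 * r j ^+ 2 else 0))%:E)%E.
  by rewrite -sumEFin; apply: eq_bigr => j _; case: ifP.
rewrite -EFinM lee_fin mulr_sumr; apply: ler_sum => j _.
rewrite /Talpha; case: ifP => h; last by rewrite mulr0 normr0 mulr0.
rewrite /above in h.
have -> : al * (a j ^-2 * r j ^+ 2) = r j * (a j ^-2 * r j * al) by rewrite expr2; ring.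
by rewrite ler_pM2l // ltW.
Qed.

Lemma eta_ub al : 0 < al ->
  ((al `^ (t - 1))%:E * rnorm1 r (Talpha a r al x) <= eta_kt a r t x)%E.
Proof. by move=> al0; apply: ereal_sup_ubound; exists al. Qed.

Lemma eta_ge0 : (0 <= eta_kt a r t x)%E.
Proof.
apply: le_trans (eta_ub ltr01).
by rewrite mule_ge0 ?N_ge0 // lee_fin powR_ge0.
Qed.

Lemma ineq2 al : 0 < al ->
  (al%:E * kt_mass a r x al `^ t^-1 <= eta_kt a r t x `^ t^-1)%E.
Proof.
move=> al0.
have hMN := MN al0; have hE := eta_ub al0; have E0 := eta_ge0.
have M0 := M_ge0 al; have N0 := N_ge0 al.
have p0 : 0 < al `^ (t - 1) by rewrite powR_gt0.
move: hMN hE M0 N0 E0.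
move: (kt_mass a r x al) (rnorm1 r (Talpha a r al x)) (eta_kt a r t x).
case=> [mm| |] [nn| |] [e| |] //; rewrite ?poweRyr ?tinv0 ?leey //; last first.
- by move=> _ h; move: h; rewrite gt0_muley ?lte_fin // leye_eq.
- by move=> h; move: h; rewrite gt0_muley ?lte_fin // leye_eq.
- by move=> _ h; move: h; rewrite gt0_muley ?lte_fin // leye_eq.
rewrite !lee_fin => h1 h2 m0 n0 e0.
have -> : al = (al `^ t) `^ t^-1.
  by rewrite -powRrM mulfV ?gt_eqF ?t0 // powRr1 // ltW.
rewrite -powRM ?powR_ge0 //.
apply: ge0_ler_powR; first by rewrite invr_ge0 ltW // t0.
- by rewrite nnegrE mulr_ge0 // powR_ge0.
- by rewrite nnegrE.
apply: le_trans h2.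
have al0' : 0 <= al by apply: ltW.
rewrite -(mulr_powRB1 al0' t0) [al * _]mulrC -mulrA ler_wpM2l //.
exact: ltW.
Qed.

Lemma main_S :
  (in_kt a r t x <-> (eta_kt a r t x < +oo)%E) /\
  (eta_kt a r t x <= (2 * (1 - 2 `^ (1 - t))^-1)%:E * (kt_norm a r t x `^ t))%E /\
  (kt_norm a r t x <= eta_kt a r t x `^ t^-1)%E.
Proof.
have K0 : (0 <= kt_norm a r t x)%E.
  apply: le_trans (_ : (0 <= 1%:E * kt_mass a r x 1 `^ t^-1)%E) _.
    by rewrite mul1e poweR_ge0.
  by apply: ereal_sup_ubound; exists 1.
have i2 : (kt_norm a r t x <= eta_kt a r t x `^ t^-1)%E.
  by apply: ge_ereal_sup => _ [al al0 ->]; exact: ineq2.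
have [q0 [q1 _]] := q_props ht1.
have C0 : 0 < 2 * (1 - 2 `^ (1 - t))^-1.
  by rewrite mulr_gt0 // invr_gt0 subr_gt0.
have i1 : (eta_kt a r t x <= (2 * (1 - 2 `^ (1 - t))^-1)%:E * (kt_norm a r t x `^ t))%E.
  move: K0; case eK : (kt_norm a r t x) => [k| |] // K0.
  - rewrite poweR_EFin -EFinM; apply: ge_ereal_sup => _ [al al0 ->].
    by apply: ineq1 => //; rewrite eK.
  - by rewrite poweRyr ?gt_eqF ?t0 // gt0_muley ?lte_fin // leey.
split; last by split.
rewrite /in_kt; split.
  move: K0 i1; case: (kt_norm a r t x) => [k| |] // _ i1 _.
  by apply: le_lt_trans i1 _; rewrite poweR_EFin -EFinM ltry.
move: i2 eta_ge0; case: (eta_kt a r t x) => [e| |] // i2 _ _.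
by apply: le_lt_trans i2 _; rewrite poweR_EFin ltry.
Qed.

End S.

Theorem lemma5p1 (R : realType) (L : countType) (a r : L -> R)
  (ha : forall j, 0 < a j) (hr : forall j, 0 < r j)
  (t : R) (ht1 : 1 < t) (ht2 : t < 2) (x : L -> R) :
  (in_kt a r t x <-> (eta_kt a r t x < +oo)%E) /\
  (eta_kt a r t x <= (2 * (1 - 2 `^ (1 - t))^-1)%:E * (kt_norm a r t x `^ t))%E /\
  (kt_norm a r t x <= eta_kt a r t x `^ t^-1)%E.
Proof. exact: main_S. Qed.
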